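(* In the iPALM setting described in the context, let $\varepsilon\in(0,1)$, $\beta_0>0$, $\rho_0>0$, $\sigma>1$, and choose $\beta_k=\beta_0\sigma^k$, $\rho_k=\rho_0\sigma^{-k}$, and $\bar\varepsilon_k=\min\{\bar\varepsilon,\sqrt{\rho_0/(20\sigma)}\,\sigma^{-k}\}$ for all $k\ge0$, where $\bar\varepsilon=\frac{\varepsilon(\sigma-1)}{8(\sigma+1)}\min\{1,\sqrt{\beta_0\rho_0}\}$. Let $D_0=\sqrt{\beta_0\rho_0\|x^{(0)}-x^*\|^2+\|\lambda^{(0)}-\lambda^*\|^2}$ and $$K=\max\Big\{\Big\lceil\log_\sigma\tfrac{4D_0\sqrt{\rho_0}}{\sqrt{\beta_0}\varepsilon}\Big\rceil,\Big\lceil\log_\sigma\tfrac{4D_0}{\beta_0\varepsilon}\Big\rceil,\Big\lceil\log_\sigma\tfrac{5(D_0+\|\lambda^*\|)^2}{\beta_0\varepsilon}\Big\rceil,\Big\lceil2\log_\sigma\tfrac{8}{\varepsilon(\log\sigma)^2}\Big\rceil-1\Big\}+1.$$ Then $x^{(K)}$ is an $\varepsilon$-KKT solution of the problem with multiplier $\lambda^{(K)}$, i.e. $\mathrm{dist}(0,\partial G(x^{(K)})+A^\top\lambda^{(K)})\le\varepsilon$, $\sqrt{\|A_Ex^{(K)}-b_E\|^2+\|[A_Ix^{(K)}-b_I]_+\|^2}\le\varepsilon$, $\lambda_I^{(K)}\ge0$, and $\|\lambda_I^{(K)}\odot(A_Ix^{(K)}-b_I)\|\le\varepsilon$.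
   Context: iPALM setting. Consider $\min_x G(x):=f(x)+r(x)$ subject to $A_Ex=b_E$, $A_Ix\le b_I$, where $f:\mathbb R^n\to\mathbb R$ is convex, differentiable with $L_f$-Lipschitz gradient and $\mu$-strongly convex ($\mu\ge0$), and $r$ is proper closed convex. Write $A=[A_E;A_I]$, $b=[b_E;b_I]$, and multipliers $\lambda=[\lambda_E;\lambda_I]$. Assume $(x^*,\lambda^* )$ satisfies the KKT conditions $0\in\partial G(x^* )+A^\top\lambda^*$, $A_Ex^*=b_E$, $A_Ix^*\le b_I$, $\lambda_I^*\ge0$, $\langle\lambda_I^*,A_Ix^*-b_I\rangle=0$. The augmented Lagrangian is $\mathcal L_\beta(x,\lambda)=G(x)+\langle\lambda_E,A_Ex-b_E\rangle+\frac\beta2\|A_Ex-b_E\|^2+\frac1{2\beta}\big(\|[\beta(A_Ix-b_I)+\lambda_I]_+\|^2-\|\lambda_I\|^2\big)$, with $[\cdot]_+$ the componentwise positive part. Given $x^{(0)}\in\mathrm{dom}(G)$, $\lambda^{(0)}$, and positive numbers $\beta_k,\rho_k$ and $\bar\varepsilon_k\ge0$, the iPALM iterates satisfy for each $k\ge0$: with $\Psi_k(x)=\mathcal L_{\beta_k}(x,\lambda^{(k)})+\frac{\rho_k}2\|x-x^{(k)}\|^2$, the point $x^{(k+1)}$ is any point with $\mathrm{dist}(0,\partial\Psi_k(x^{(k+1)}))\le\bar\varepsilon_k$, and $\lambda_E^{(k+1)}=\lambda_E^{(k)}+\beta_k(A_Ex^{(k+1)}-b_E)$, $\lambda_I^{(k+1)}=[\lambda_I^{(k)}+\beta_k(A_Ix^{(k+1)}-b_I)]_+$.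 $\partial$ is the convex subdifferential and $\mathrm{dist}(0,S)=\inf_{s\in S}\|s\|$. $\odot$ is the componentwise product; $\log$ is the natural logarithm. *)

(* Defs.v *)
From HB Require Import structures.
From mathcomp Require Import all_boot all_order all_algebra.
From mathcomp Require Import all_classical all_reals all_analysis.
Set Implicit Arguments. Unset Strict Implicit. Unset Printing Implicit Defensive.
Import Order.TTheory GRing.Theory Num.Theory.
Local Open Scope classical_set_scope.
Local Open Scope ring_scope.

Section Defs.
Variable R : realType.

Definition vdot {n : nat} (u v : 'cV[R]_n) : R := \sum_(i < n) u i 0 * v i 0.
Definition vnorm {n : nat} (u : 'cV[R]_n) : R := Num.sqrt (vdot u u).

Definition ppart {m : nat} (u : 'cV[R]_m) : 'cV[R]_m := \col_i Num.max (u i 0) 0.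
Definition hadamard {m : nat} (u v : 'cV[R]_m) : 'cV[R]_m := \col_i (u i 0 * v i 0).

Definition has_gradient {n : nat} (f : 'cV[R]_n -> R) (g : 'cV[R]_n -> 'cV[R]_n) :=
  forall x (e : R), 0 < e -> exists2 d : R, 0 < d & forall y,
    vnorm (y - x) < d -> `|f y - f x - vdot (g x) (y - x)| <= e * vnorm (y - x).

Definition lipschitz_map {n : nat} (L : R) (g : 'cV[R]_n -> 'cV[R]_n) :=
  forall x y, vnorm (g x - g y) <= L * vnorm (x - y).

Definition convex_fun {n : nat} (f : 'cV[R]_n -> R) :=
  forall x y (t : R), 0 <= t <= 1 ->
    f (t *: x + (1 - t) *: y) <= t * f x + (1 - t) * f y.

Definition strongly_convex {n : nat} (mu : R) (f : 'cV[R]_n -> R) :=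
  forall x y (t : R), 0 <= t <= 1 ->
    f (t *: x + (1 - t) *: y) <=
      t * f x + (1 - t) * f y - mu / 2 * t * (1 - t) * vnorm (x - y) ^+ 2.

Definition proper_fun {n : nat} (r : 'cV[R]_n -> \bar R) :=
  (forall x, r x != -oo%E) /\ exists x, r x \is a fin_num.

Definition convex_efun {n : nat} (r : 'cV[R]_n -> \bar R) :=
  forall x y : 'cV[R]_n, forall t : R, 0 < t < 1 ->
    (r (t *: x + (1 - t) *: y)%R <= (t%:E * r x) + ((1 - t)%:E * r y))%E.

(* closed = lower semicontinuous *)
Definition lsc_fun {n : nat} (r : 'cV[R]_n -> \bar R) :=
  forall x (t : R), (t%:E < r x)%E -> exists2 d : R, 0 < d &
    forall y, vnorm (y - x) < d -> (t%:E < r y)%E.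

(* convex subdifferential (empty outside the domain) *)
Definition subdiff {n : nat} (h : 'cV[R]_n -> \bar R) (x : 'cV[R]_n) : set 'cV[R]_n :=
  [set g | h x \is a fin_num /\
           forall y, (h x + (vdot g (y - x))%:E <= h y)%E].

(* dist(0, S) = inf_{s in S} ||s||  (+oo if S is empty) *)
Definition dist0 {n : nat} (S : set 'cV[R]_n) : \bar R :=
  ereal_inf [set (vnorm s)%:E | s in S].

Definition aug_lag {n mE mI : nat} (AE : 'M[R]_(mE, n)) (bE : 'cV[R]_mE)
  (AI : 'M[R]_(mI, n)) (bI : 'cV[R]_mI) (G : 'cV[R]_n -> \bar R) (beta : R)
  (x : 'cV[R]_n) (lamE : 'cV[R]_mE) (lamI : 'cV[R]_mI) : \bar R :=
  (G x + (vdot lamE (AE *m x - bE) + beta / 2 * vnorm (AE *m x - bE) ^+ 2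
     + (2 * beta)^-1 * (vnorm (ppart (beta *: (AI *m x - bI) + lamI)) ^+ 2
                        - vnorm lamI ^+ 2))%:E)%E.

Definition logb (sigma a : R) : R := ln a / ln sigma.

(* ceil(log_sigma a), with the convention that it is -oo (hence dropped from
   the max) when a <= 0; represented by falling back to the default value dflt *)
Definition ceil_log_or (sigma a : R) (dflt : int) : int :=
  if 0 < a then Num.ceil (logb sigma a) else dflt.

Definition K_int (eps beta0 rho0 sigma D0 nlamstar : R) : int :=
  let t4 := Num.ceil (2 * logb sigma (8 / (eps * (ln sigma) ^+ 2))) - 1 in
  Num.max (Num.max (Num.max
    (ceil_log_or sigma (4 * D0 * Num.sqrt rho0 / (Num.sqrt beta0 * eps)) t4)
    (ceil_log_or sigma (4 * D0 / (beta0 * eps)) t4))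
    (ceil_log_or sigma (5 * (D0 + nlamstar) ^+ 2 / (beta0 * eps)) t4))
    t4 + 1.

Definition K_nat (eps beta0 rho0 sigma D0 nlamstar : R) : nat :=
  absz (Num.max (K_int eps beta0 rho0 sigma D0 nlamstar) 1).

End Defs.

(* Main.v *)
Require Import Defs.
From HB Require Import structures.
From mathcomp Require Import all_boot all_order all_algebra.
From mathcomp Require Import all_classical all_reals all_analysis.
From mathcomp Require Import lra ring.
Import Order.TTheory GRing.Theory Num.Theory.
Local Open Scope classical_set_scope.
Local Open Scope ring_scope.

Lemma vdotE {R : realType} {k : nat} (u v : 'cV[R]_k) : vdot u v = (u^T *m v) 0 0.
Proof. by rewrite /vdot !mxE; apply: eq_bigr => i _; rewrite !mxE. Qed.

Lemma vdotC {R : realType} {k : nat} (u v : 'cV[R]_k) : vdot u v = vdot v u.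
Proof. by rewrite /vdot; apply: eq_bigr => i _; rewrite mulrC. Qed.

Lemma vdotDl {R : realType} {k : nat} (u w v : 'cV[R]_k) : vdot (u + w) v = vdot u v + vdot w v.
Proof. by rewrite /vdot -big_split; apply: eq_bigr => i _; rewrite !mxE mulrDl. Qed.

Lemma vdotNl {R : realType} {k : nat} (u v : 'cV[R]_k) : vdot (- u) v = - vdot u v.
Proof. by rewrite /vdot -sumrN; apply: eq_bigr => i _; rewrite !mxE mulNr. Qed.

Lemma vdotZl {R : realType} {k : nat} a (u v : 'cV[R]_k) : vdot (a *: u) v = a * vdot u v.
Proof. by rewrite /vdot mulr_sumr; apply: eq_bigr => i _; rewrite !mxE mulrA. Qed.

Lemma vdotBl {R : realType} {k : nat} (u w v : 'cV[R]_k) : vdot (u - w) v = vdot u v - vdot w v.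
Proof. by rewrite vdotDl vdotNl. Qed.

Lemma vdotDr {R : realType} {k : nat} (u w v : 'cV[R]_k) : vdot v (u + w) = vdot v u + vdot v w.
Proof. by rewrite !(vdotC v) vdotDl. Qed.
Lemma vdotBr {R : realType} {k : nat} (u w v : 'cV[R]_k) : vdot v (u - w) = vdot v u - vdot v w.
Proof. by rewrite !(vdotC v) vdotBl. Qed.
Lemma vdotZr {R : realType} {k : nat} a (u v : 'cV[R]_k) : vdot v (a *: u) = a * vdot v u.
Proof. by rewrite !(vdotC v) vdotZl. Qed.
Lemma vdotNr {R : realType} {k : nat} (u v : 'cV[R]_k) : vdot v (- u) = - vdot v u.
Proof. by rewrite !(vdotC v) vdotNl. Qed.

Lemma vdot_tr {R : realType} {k : nat} l (A : 'M[R]_(k, l)) (u : 'cV[R]_k) (v : 'cV[R]_l) :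
  vdot (A^T *m u) v = vdot u (A *m v).
Proof. by rewrite !vdotE trmx_mul trmxK mulmxA. Qed.

Lemma vdot_ge0 {R : realType} {k : nat} (u : 'cV[R]_k) : 0 <= vdot u u.
Proof. by apply: sumr_ge0 => i _; rewrite -expr2 sqr_ge0. Qed.

Lemma vdot0 {R : realType} {k : nat} (u : 'cV[R]_k) : vdot u u = 0 -> u = 0.
Proof.
move=> h; apply/matrixP => i j; rewrite ord1 mxE.
have : u i 0 * u i 0 = 0.
  apply: (psumr_eq0P (P := predT) (F := fun i => u i 0 * u i 0)) => //.
  by move=> *; rewrite -expr2 sqr_ge0.
by move/eqP; rewrite mulf_eq0 orbb => /eqP.
Qed.

Lemma vnorm2 {R : realType} {k : nat} (u : 'cV[R]_k) : vnorm u ^+ 2 = vdot u u.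
Proof. by rewrite /vnorm sqr_sqrtr // vdot_ge0. Qed.

Lemma vnorm_ge0 {R : realType} {k : nat} (u : 'cV[R]_k) : 0 <= vnorm u.
Proof. exact: sqrtr_ge0. Qed.

Lemma CS2 {R : realType} {k : nat} (u v : 'cV[R]_k) : vdot u v ^+ 2 <= vdot u u * vdot v v.
Proof.
set a := vdot v v; set b := vdot u v.
have h := vdot_ge0 (a *: u - b *: v).
rewrite vdotBl !vdotBr !vdotZl !vdotZr (vdotC v u) -/a -/b in h.
have ha : 0 <= a by exact: vdot_ge0.
case: (ltrP 0 a) => ha0.
  have : 0 <= a * (a * vdot u u - b ^+ 2) by rewrite mulrBr; nra.
  rewrite pmulr_rge0 // subr_ge0 => h3; rewrite mulrC; exact: h3.
have a0 : a = 0 by apply/eqP; rewrite eq_le ha0 ha.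
have v0 : v = 0 by apply: vdot0.
have b0 : b = 0 by rewrite /b v0 /vdot big1 // => i _; rewrite mxE mulr0.
by rewrite a0 b0 expr2 !mulr0.
Qed.

Lemma CS {R : realType} {k : nat} (u v : 'cV[R]_k) : `|vdot u v| <= vnorm u * vnorm v.
Proof.
rewrite -[leRHS]ger0_norm ?mulr_ge0 ?vnorm_ge0 //.
rewrite -ler_sqr ?nnegrE ?normr_ge0 // !real_normK ?num_real // exprMn !vnorm2; exact: CS2.
Qed.

Lemma CS' {R : realType} {k : nat} (u v : 'cV[R]_k) : vdot u v <= vnorm u * vnorm v.
Proof. exact: le_trans (ler_norm _) (CS u v). Qed.

Lemma vnormD {R : realType} {k : nat} (u v : 'cV[R]_k) : vnorm (u + v) <= vnorm u + vnorm v.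
Proof.
rewrite -ler_sqr ?nnegrE ?addr_ge0 ?vnorm_ge0 // vnorm2 vdotDl !vdotDr sqrrD !vnorm2 (vdotC v u).
have := CS' u v; lra.
Qed.

Lemma vnorm_le {R : realType} {k : nat} (u v : 'cV[R]_k) : vdot u u <= vdot v v -> vnorm u <= vnorm v.
Proof. by move=> h; rewrite /vnorm ler_sqrt // vdot_ge0. Qed.

Lemma small_t_lemma {R : realType} (a b Q : R) :
  (forall t : R, 0 < t < 1 -> a <= b + t * Q) -> a <= b.
Proof.
move=> h; rewrite leNgt; apply/negP => hab.
set t := Num.min (2^-1) ((a - b) / (2 * (`|Q| + 1))).
have hQ : 0 < `|Q| + 1 by rewrite ltr_wpDl.
have ht0 : 0 < t by rewrite lt_min invr_gt0 ltr0n /= divr_gt0 ?subr_gt0 ?mulr_gt0.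
have ht1 : t < 1 by rewrite gt_min; apply/orP; left; rewrite invf_lt1 ?ltr1n.
have := h t; rewrite ht0 ht1 => /(_ isT) h2.
have ht2 : t <= (a - b) / (2 * (`|Q| + 1)) by rewrite ge_min lexx orbT.
have : t * Q <= t * `|Q| by rewrite ler_pM2l // ler_norm.
have : t * (2 * (`|Q| + 1)) <= a - b.
  by rewrite -ler_pdivlMr // mulr_gt0.
have : 0 <= t := ltW ht0.
nra.
Qed.

Lemma subgrad_shift {R : realType} {n : nat} (f : 'cV[R]_n -> R) (r : 'cV[R]_n -> \bar R)
  (H : 'cV[R]_n -> R) (x s d : 'cV[R]_n) :
  convex_fun f -> convex_efun r -> (forall y, r y != -oo%E) ->
  (forall v, exists Q : R, forall t : R, 0 < t < 1 ->
       H (x + t *: v) <= H x + t * vdot d v + t ^+ 2 * Q) ->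
  s \in subdiff (fun y => ((f y)%:E + r y) + (H y)%:E)%E x ->
  (s - d) \in subdiff (fun y => ((f y)%:E + r y))%E x.
Proof.
move=> fc rc rN hH; rewrite !inE => -[hfin hs]; split.
  move: hfin; rewrite fin_numD => /andP[+ _]; done.
have [rx erx] : exists rx : R, r x = rx%:E.
  move: hfin; rewrite !fin_numD => /andP[/andP[_ ] + _].
  by case: (r x) => // v _; exists v.
move=> y; rewrite erx.
case ery: (r y) => [ry| |]; last by have := rN y; rewrite ery.
  2: by rewrite addey // leey.
rewrite -!EFinD lee_fin.
have [Q hQ] := hH (y - x).
apply: (@small_t_lemma _ _ _ Q) => t /andP[t0 t1].
set z := t *: y + (1 - t) *: x.
have ez : z = x + t *: (y - x).
  by apply/matrixP => i j; rewrite /z !mxE; ring.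
have hfz := fc y x t; rewrite (ltW t0) (ltW t1) /= in hfz; have {hfz} hfz := hfz isT.
have hrz := rc y x t; rewrite t0 t1 /= in hrz; have {hrz} hrz := hrz isT.
rewrite ery erx -!EFinM -EFinD in hrz.
have [rz erz] : exists rz : R, r z = rz%:E.
  move: hrz; rewrite -/z; case ez' : (r z) => [v|//|]; first by exists v.
  by have := rN z; rewrite ez'.
rewrite -/z erz lee_fin in hrz.
have hsz := hs z; rewrite erx erz -!EFinD lee_fin in hsz.
have hHz := hQ t; rewrite t0 t1 /= -ez in hHz; have {hHz} hHz := hHz isT.
have ezx : z - x = t *: (y - x) by rewrite ez addrC addKr.
rewrite ezx vdotZr in hsz.
have e1 : vdot (s - d) (y - x) = vdot s (y - x) - vdot d (y - x) by rewrite vdotBl.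
rewrite e1.
have key : t * (f x + rx + (vdot s (y - x) - vdot d (y - x))) <= t * (f y + ry + t * Q).
  nra.
by rewrite ler_pM2l // in key; lra.
Qed.

Lemma ppart_bound {R : realType} {m : nat} (w u : 'cV[R]_m) :
  vdot (ppart (w + u)) (ppart (w + u)) <=
  vdot (ppart w) (ppart w) + 2 * vdot (ppart w) u + vdot u u.
Proof.
rewrite /vdot mulr_sumr -!big_split /=; apply: ler_sum => i _; rewrite !mxE.
set a := w i 0; set b := u i 0.
have h : Num.max (a + b) 0 * Num.max (a + b) 0 <= (Num.max a 0 + b) * (Num.max a 0 + b).
  case: (leP 0 (a + b)) => hab; case: (leP 0 a) => ha; nra.
apply: (le_trans h); lra.
Qed.

Lemma mulmx_xtv {R : realType} {k l : nat} (A : 'M[R]_(k, l)) (x v : 'cV[R]_l) (t : R) :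
  A *m (x + t *: v) = A *m x + t *: (A *m v).
Proof. by rewrite mulmxDr scalemxAr. Qed.

Definition hreal {R : realType} {n mE mI : nat} (AE : 'M[R]_(mE, n)) (bE : 'cV[R]_mE)
  (AI : 'M[R]_(mI, n)) (bI : 'cV[R]_mI) (beta rho : R) (lE : 'cV[R]_mE) (lI : 'cV[R]_mI)
  (xk : 'cV[R]_n) (y : 'cV[R]_n) : R :=
  vdot lE (AE *m y - bE) + beta / 2 * vnorm (AE *m y - bE) ^+ 2
     + (2 * beta)^-1 * (vnorm (ppart (beta *: (AI *m y - bI) + lI)) ^+ 2
                        - vnorm lI ^+ 2) + rho / 2 * vnorm (y - xk) ^+ 2.

Lemma hreal_bound {R : realType} {n mE mI : nat} (AE : 'M[R]_(mE, n)) (bE : 'cV[R]_mE)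
  (AI : 'M[R]_(mI, n)) (bI : 'cV[R]_mI) (beta rho : R) (lE : 'cV[R]_mE) (lI : 'cV[R]_mI)
  (xk x v : 'cV[R]_n) (t : R) : 0 < beta ->
  hreal AE bE AI bI beta rho lE lI xk (x + t *: v) <=
  hreal AE bE AI bI beta rho lE lI xk x
  + t * vdot (AE^T *m (lE + beta *: (AE *m x - bE)) + AI^T *m ppart (beta *: (AI *m x - bI) + lI)
              + rho *: (x - xk)) v
  + t ^+ 2 * (beta / 2 * vdot (AE *m v) (AE *m v) + beta / 2 * vdot (AI *m v) (AI *m v)
              + rho / 2 * vdot v v).
Proof.
move=> hb; rewrite /hreal !vnorm2.
set e := AE *m x - bE; set w := beta *: (AI *m x - bI) + lI; set p := ppart w.
have e1 : AE *m (x + t *: v) - bE = e + t *: (AE *m v).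
  by rewrite mulmx_xtv /e addrAC.
have e2 : beta *: (AI *m (x + t *: v) - bI) + lI = w + (t * beta) *: (AI *m v).
  by rewrite mulmx_xtv /w addrAC scalerDr addrAC scalerA mulrC.
have e3 : x + t *: v - xk = (x - xk) + t *: v by rewrite addrAC.
rewrite e1 e2 e3.
have hp := ppart_bound w ((t * beta) *: (AI *m v)); rewrite -/p in hp.
rewrite ?(vdotDl, vdotDr, vdot_tr, vdotZl, vdotZr) in hp.
rewrite ?(vdotDl, vdotDr, vdot_tr, vdotZl, vdotZr).
rewrite (vdotC (AE *m v) (AE *m x)) (vdotC (AE *m v) (- bE)) (vdotC v x) (vdotC v (- xk)).
set P := vdot p p in hp *; set PAv := vdot p (AI *m v) in hp *.
set AIv := vdot (AI *m v) (AI *m v) in hp *.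
have hb' : 0 < (2 * beta)^-1 by rewrite invr_gt0 mulr_gt0.
have hq : (2 * beta)^-1 * vdot (ppart (w + (t * beta) *: (AI *m v)))
   (ppart (w + (t * beta) *: (AI *m v))) <= (2 * beta)^-1 *
   (P + 2 * (t * beta * PAv) + t * beta * (t * beta * AIv)) by rewrite ler_pM2l.
have ee : (2 * beta)^-1 * (P + 2 * (t * beta * PAv) + t * beta * (t * beta * AIv))
   = (2 * beta)^-1 * P + t * PAv + t ^+ 2 * (beta / 2 * AIv).
  by field; rewrite gt_eqF.
rewrite ee in hq.
lra.
Qed.

Lemma pow_expR {R : realType} (s : R) (j : nat) : 0 < s -> s ^+ j = expR (j%:R * ln s).
Proof. by move=> hs; rewrite expRM_natl lnK. Qed.

Lemma logcond {R : realType} (s a : R) (d : int) (j : nat) : 1 < s ->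
  (ceil_log_or s a d <= j%:Z)%R -> a <= s ^+ j.
Proof.
move=> hs; rewrite /ceil_log_or; case: ifP => ha; last first.
  move=> _; have := negbT ha; rewrite -leNgt => ha'; apply: le_trans ha' _.
  by rewrite exprn_ge0 // ltW // (lt_trans ltr01).
rewrite ceil_le_int /logb => h.
have hL : 0 < ln s by rewrite ln_gt0.
rewrite ler_pdivrMr // in h.
have s0 : 0 < s by rewrite (lt_trans ltr01).
rewrite pow_expR // -(lnK ha) ler_expR.
exact: h.
Qed.

Lemma expR_ge_sq {R : realType} (y : R) : 0 <= y -> y ^+ 2 <= expR y.
Proof.
move=> hy.
have ey : y = y / 4 + y / 4 + (y / 4 + y / 4) by field.
have h1 : y <= expR (y / 4) * expR (y / 4).
  have h2 := expR_ge1Dx (y / 4).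
  have h3 : 0 <= (expR (y / 4) - (1 + y / 4)) * (expR (y / 4) + (1 + y / 4)).
    by apply: mulr_ge0; lra.
  have := sqr_ge0 (1 - y / 4); nra.
rewrite [in leRHS]ey !expRD expr2.
by apply: ler_pM.
Qed.

Lemma cond4 {R : realType} (s eps : R) (K : nat) : 1 < s -> 0 < eps ->
  (Num.ceil (2 * logb s (8 / (eps * (ln s) ^+ 2))) - 1 + 1 <= K%:Z)%R ->
  2 * K%:R ^+ 2 <= eps * s ^+ K.
Proof.
move=> hs he; rewrite subrK ceil_le_int /logb => h.
have hL : 0 < ln s by rewrite ln_gt0.
set L := ln s in h hL *.
set b := 8 / (eps * L ^+ 2) in h.
have hb : 0 < b by rewrite divr_gt0 // mulr_gt0 // exprn_gt0.
have s0 : 0 < s by rewrite (lt_trans ltr01).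
set y := K%:R * L / 2.
have hy : 0 <= y by rewrite /y divr_ge0 // mulr_ge0 // ltW.
have hby : b <= expR y.
  rewrite -(lnK hb) ler_expR /y.
  move: h; rewrite mulrA ler_pdivrMr //.
  have -> : (K%:~R : R) = K%:R by [].
  move=> h; rewrite ler_pdivlMr //; lra.
have eK : s ^+ K = expR y * expR y.
  by rewrite pow_expR // -expRD; congr expR; rewrite /y /L; field.
rewrite eK.
have hy2 := @expR_ge_sq _ y hy.
have ebe : eps * b = 8 / L ^+ 2 by rewrite /b; field; rewrite gt_eqF // gt_eqF // exprn_gt0.
have h5 : b * expR y <= expR y * expR y := ler_wpM2r (expR_ge0 y) hby.
have h6 := ler_wpM2l (ltW he) h5.
rewrite [eps * (b * _)]mulrA ebe [eps * (_ * _)]mulrA in h6.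
have ey : y ^+ 2 * (8 / L ^+ 2) = 2 * K%:R ^+ 2.
  by rewrite /y; field; rewrite gt_eqF.
have : y ^+ 2 * (8 / L ^+ 2) <= expR y * (8 / L ^+ 2).
  by rewrite ler_pM2r // divr_gt0 // exprn_gt0.
rewrite ey; nra.
Qed.

Lemma sum_nonpos_eq0 {R : realType} {m : nat} (F : 'I_m -> R) :
  (forall i, F i <= 0) -> \sum_i F i = 0 -> forall i, F i = 0.
Proof.
move=> hF hs i; apply/eqP; rewrite -oppr_eq0; apply/eqP.
apply: (psumr_eq0P (P := predT) (F := fun i => - F i)) => //.
- by move=> j _; rewrite oppr_ge0.
- by rewrite sumrN hs oppr0.
Qed.

Lemma dual_I {R : realType} {m : nat} (beta : R) (lk ls w ws : 'cV[R]_m) :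
  0 < beta -> (forall i, 0 <= ls i 0) -> (forall i, ws i 0 <= 0) -> vdot ls ws = 0 ->
  vdot (ppart (lk + beta *: w) - ls) (ppart (lk + beta *: w) - lk) <=
  beta * vdot (ppart (lk + beta *: w) - ls) (w - ws).
Proof.
move=> hb hls hws hc.
have hc' : forall i, ls i 0 * ws i 0 = 0.
  apply: sum_nonpos_eq0 (hc) => i; rewrite mulr_ge0_le0 //.
rewrite /vdot mulr_sumr; apply: ler_sum => i _; rewrite !mxE.
have := hc' i; have := hls i; have := hws i.
set a := lk i 0; set l := ls i 0; set u := w i 0; set v := ws i 0.
move=> hv hl hlv.
have hblv : beta * (l * v) = 0 by rewrite hlv mulr0.
case: (leP 0 (a + beta * u)) => hu.
  have h1 : 0 <= (a + beta * u) * (- v) by apply: mulr_ge0; lra.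
  have h2 : 0 <= beta * ((a + beta * u) * (- v)) by apply: mulr_ge0; lra.
  nra.
nra.
Qed.

Lemma feas_I {R : realType} {m : nat} (beta : R) (lk w : 'cV[R]_m) : 0 < beta ->
  beta ^+ 2 * vdot (ppart w) (ppart w) <=
  vdot (ppart (lk + beta *: w) - lk) (ppart (lk + beta *: w) - lk).
Proof.
move=> hb; rewrite /vdot mulr_sumr; apply: ler_sum => i _; rewrite !mxE.
set a := lk i 0; set u := w i 0.
have hbu : 0 <= beta * u -> 0 <= beta * u * (beta * u) by move=> h; exact: mulr_ge0.
case: (leP 0 (a + beta * u)) => hu; case: (leP 0 u) => hu'.
- rewrite expr2; nra.
- rewrite mul0r mulr0; exact: (sqr_ge0 _ : 0 <= _ ^+ 2) || (rewrite -expr2 sqr_ge0).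
- have h1 : 0 <= beta * u by apply: mulr_ge0; lra.
  have h2 : 0 <= (- a - beta * u) * (- a + beta * u) by apply: mulr_ge0; lra.
  rewrite expr2; nra.
- by rewrite mul0r mulr0 sub0r mulrNN -expr2 sqr_ge0.
Qed.

Lemma sum_prod_le {R : realType} {m : nat} (F H : 'I_m -> R) :
  (forall i, 0 <= F i) -> (forall i, 0 <= H i) ->
  \sum_i F i * H i <= (\sum_i F i) * (\sum_i H i).
Proof.
move=> hF hH; rewrite mulr_suml; apply: ler_sum => i _.
apply: ler_wpM2l => //; rewrite (bigD1 i) //= lerDl; exact: sumr_ge0.
Qed.

Lemma compl_I {R : realType} {m : nat} (beta : R) (lk w : 'cV[R]_m) : 0 < beta ->
  beta ^+ 2 * vdot (hadamard (ppart (lk + beta *: w)) w) (hadamard (ppart (lk + beta *: w)) w) <=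
  vdot (ppart (lk + beta *: w)) (ppart (lk + beta *: w)) *
  vdot (ppart (lk + beta *: w) - lk) (ppart (lk + beta *: w) - lk).
Proof.
move=> hb; set l1 := ppart (lk + beta *: w).
apply: le_trans (@sum_prod_le _ _ (fun i => l1 i 0 * l1 i 0)
   (fun i => (l1 - lk) i 0 * (l1 - lk) i 0) _ _); last 2 first.
- by move=> i; rewrite -expr2 sqr_ge0.
- by move=> i; rewrite -expr2 sqr_ge0.
rewrite /vdot mulr_sumr; apply: ler_sum => i _; rewrite /l1 !mxE.
set a := lk i 0; set u := w i 0.
case: (leP 0 (a + beta * u)) => hu; nra.
Qed.

Lemma step_scalar {R : realType} (a D0 D1 d : R) : 0 <= a -> 0 <= D0 -> 0 <= D1 -> 0 <= d ->
  D1 ^+ 2 + d ^+ 2 <= D0 ^+ 2 + 2 * a * D1 -> D1 <= D0 + 2 * a /\ d <= D0 + a.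
Proof.
move=> ha h0 h1 hd h; split.
  rewrite leNgt; apply/negP => hc.
  have : (D0 + 2 * a) * D0 < D1 * (D1 - 2 * a).
    apply: (le_lt_trans (y := (D0 + 2 * a) * (D1 - 2 * a))).
      apply: ler_wpM2l; lra.
    have hz : 0 < D1 - 2 * a by lra.
    rewrite ltr_pM2r //; lra.
  nra.
have : d ^+ 2 <= (D0 + a) ^+ 2 by have := sqr_ge0 (D1 - a); nra.
move=> h2; rewrite -ler_sqr ?nnegrE //; lra.
Qed.

Lemma polar {R : realType} {k : nat} (a b z : 'cV[R]_k) :
  2 * vdot (a - b) (a - z) = vdot (a - z) (a - z) + vdot (a - b) (a - b) - vdot (b - z) (b - z).
Proof.
have -> : b - z = (a - z) - (a - b).
  by apply/matrixP => i j; rewrite !mxE; ring.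
move: (a - z) (a - b) => p q.
rewrite vdotBl !vdotBr (vdotC q p); ring.
Qed.

Lemma mono_sub {R : realType} {n : nat} (G : 'cV[R]_n -> \bar R) (x y gx gy : 'cV[R]_n) :
  gx \in subdiff G x -> gy \in subdiff G y -> 0 <= vdot (gx - gy) (x - y).
Proof.
rewrite !inE => -[fx hx] [fy hy].
have h1 := hx y; have h2 := hy x.
rewrite -(fineK fx) -(fineK fy) -!EFinD !lee_fin in h1 h2.
have e : vdot gy (x - y) = - vdot gy (y - x).
  by rewrite -vdotNr opprB.
rewrite vdotBl e -vdotNr opprB.
have e2 : vdot gx (x - y) = - vdot gx (y - x) by rewrite -vdotNr opprB.
rewrite e2; lra.
Qed.

Lemma vnormZ {R : realType} {k : nat} (a : R) (u : 'cV[R]_k) : vnorm (a *: u) = `|a| * vnorm u.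
Proof.
by rewrite /vnorm vdotZl vdotZr mulrA -expr2 sqrtrM ?sqr_ge0 // sqrtr_sqr.
Qed.

Lemma vnormN {R : realType} {k : nat} (u : 'cV[R]_k) : vnorm (- u) = vnorm u.
Proof. by rewrite /vnorm vdotNl vdotNr opprK. Qed.

Lemma vnormB {R : realType} {k : nat} (u v : 'cV[R]_k) : vnorm (u - v) <= vnorm u + vnorm v.
Proof. by rewrite -(vnormN v); apply: vnormD. Qed.

Lemma sqrt_of_sq {R : realType} (a : R) : 0 <= a -> Num.sqrt (a ^+ 2) = a.
Proof. by move=> h; rewrite sqrtr_sqr ger0_norm. Qed.

Lemma le_sqrt_sq {R : realType} (a X : R) : 0 <= a -> a ^+ 2 <= X -> a <= Num.sqrt X.
Proof.
move=> ha h; rewrite -(@sqrt_of_sq _ a ha) ler_sqrt //; apply: le_trans h; exact: sqr_ge0.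
Qed.

Lemma final_stat {R : realType} (eps sg sb sr N D0 m1 eb ej xn dx Dl : R) :
  0 < eps -> 1 < sg -> 0 < sb -> 0 < sr -> 0 < N -> 0 <= D0 -> 0 <= m1 <= 1 ->
  eb = eps * (sg - 1) / (8 * (sg + 1)) * m1 ->
  ej <= eb -> xn <= 6 / 5 * ej -> 0 <= dx -> sb * sr * dx <= Dl ->
  Dl <= D0 + (6 / 5 * (sb * sb) * eb / (sb * sr)) * ((sg + 1) / (sg - 1)) * N ->
  4 * D0 * sr / (sb * eps) <= N ->
  xn + sr ^+ 2 / N * dx <= eps.
Proof.
move=> he hs hb hr hN hD /andP[hm0 hm1] heb hej hxn hdx hDl hDlb hc1.
have hW : (6 / 5 * (sb * sb) * eb / (sb * sr)) * ((sg + 1) / (sg - 1)) = 3 / 20 * eps * m1 * sb / sr.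
  rewrite heb; field; rewrite ?gt_eqF //; lra.
rewrite hW in hDlb.
have e1 : sr ^+ 2 / N * dx = sr / (N * sb) * (sb * sr * dx).
  by field; rewrite ?gt_eqF.
have hp : 0 < sr / (N * sb) by rewrite divr_gt0 // mulr_gt0.
have h2 : sr / (N * sb) * (sb * sr * dx) <= sr / (N * sb) * (D0 + 3 / 20 * eps * m1 * sb / sr * N).
  rewrite ler_pM2l //; exact: le_trans hDlb.
have e3 : sr / (N * sb) * (D0 + 3 / 20 * eps * m1 * sb / sr * N) = sr * D0 / (N * sb) + 3 / 20 * eps * m1.
  by field; rewrite ?gt_eqF.
rewrite ler_pdivrMr ?mulr_gt0 // in hc1.
have h4 : sr * D0 / (N * sb) <= eps / 4.
  rewrite ler_pdivrMr ?mulr_gt0 //; nra.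
have heb' : eb <= eps / 8.
  set u := (sg - 1) / (8 * (sg + 1)).
  have -> : eb = eps * (u * m1) by rewrite heb /u; field; lra.
  have hu1 : u <= 1 / 8.
    rewrite /u ler_pdivrMr; last by lra.
    lra.
  have hu0 : 0 <= u by apply: divr_ge0; lra.
  have : u * m1 <= 1 / 8 by nra.
  have : 0 <= u * m1 by apply: mulr_ge0.
  nra.
have hem : eps * m1 <= eps by nra.
rewrite e1; apply: le_trans (lerD (lexx xn) h2) _; rewrite e3; lra.
Qed.

Lemma final_feas {R : realType} (eps sg sb sr N D0 m1 eb Dl F : R) :
  0 < eps -> 1 < sg -> 0 < sb -> 0 < sr -> 0 < N -> 0 <= D0 -> 0 <= m1 -> m1 <= sb * sr ->
  eb = eps * (sg - 1) / (8 * (sg + 1)) * m1 ->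
  sb * sb * N * F <= Dl ->
  Dl <= D0 + (6 / 5 * (sb * sb) * eb / (sb * sr)) * ((sg + 1) / (sg - 1)) * N ->
  4 * D0 / (sb * sb * eps) <= N ->
  F <= eps.
Proof.
move=> he hs hb hr hN hD hm0 hm1 heb hF hDlb hc2.
have hW : (6 / 5 * (sb * sb) * eb / (sb * sr)) * ((sg + 1) / (sg - 1)) = 3 / 20 * eps * m1 * sb / sr.
  rewrite heb; field; rewrite ?gt_eqF //; lra.
rewrite hW in hDlb.
have hbN : 0 < sb * sb * N by rewrite !mulr_gt0.
have hF2 : F <= (D0 + 3 / 20 * eps * m1 * sb / sr * N) / (sb * sb * N).
  by rewrite ler_pdivlMr // mulrC; apply: le_trans hDlb.
have e3 : (D0 + 3 / 20 * eps * m1 * sb / sr * N) / (sb * sb * N) = D0 / (sb * sb * N) + 3 / 20 * eps * (m1 / (sb * sr)).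
  by field; rewrite ?gt_eqF.
rewrite e3 in hF2.
have hm : m1 / (sb * sr) <= 1 by rewrite ler_pdivrMr ?mulr_gt0 // mul1r.
have hem : eps * (m1 / (sb * sr)) <= eps by rewrite ler_piMr // ?divr_ge0 // ?mulr_ge0 // ltW.
rewrite ler_pdivrMr ?mulr_gt0 // in hc2.
have h4 : D0 / (sb * sb * N) <= eps / 4.
  rewrite ler_pdivrMr //; nra.
lra.
Qed.

Lemma final_compl {R : realType} (eps sg b0 N K D0 nl T B Y Dk Dl : R) :
  0 < eps -> 1 < sg -> 0 < b0 -> 0 < N -> 0 <= D0 -> 0 <= nl -> 0 <= T -> 0 <= B -> 0 <= K ->
  b0 * N * Y <= (Dk + nl) * Dl -> 0 <= Dk -> 0 <= Dl ->
  Dk <= D0 + 2 * T -> Dl <= D0 + 2 * T -> T <= K * B -> B ^+ 2 = 9 * b0 / (125 * sg) ->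
  5 * (D0 + nl) ^+ 2 / (b0 * eps) <= N -> 2 * K ^+ 2 <= eps * (sg * N) ->
  Y <= eps.
Proof.
move=> he hs hb hN hD hnl hT hB hK hY hDk hDl h1 h2 hTB hB2 hc3 hc4.
set P := D0 + nl in hc3 *.
have hP : 0 <= P by rewrite addr_ge0.
have h3 : (Dk + nl) * Dl <= (P + 2 * T) * (P + 2 * T).
  apply: ler_pM; rewrite ?addr_ge0 //; rewrite /P; lra.
have h5 : (P + 2 * T) * (P + 2 * T) <= 2 * P ^+ 2 + 8 * T ^+ 2.
  have := sqr_ge0 (P - 2 * T); nra.
have h6 : T ^+ 2 <= K ^+ 2 * B ^+ 2.
  rewrite -exprMn; rewrite ler_sqr ?nnegrE ?mulr_ge0 //.
rewrite hB2 in h6.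
rewrite ler_pdivrMr ?mulr_gt0 // in hc3.
have hsg : 0 < sg by lra.
have h7 : K ^+ 2 * (9 * b0 / (125 * sg)) <= eps * N * (9 * b0 / 250).
  have e : K ^+ 2 * (9 * b0 / (125 * sg)) = (2 * K ^+ 2) * (9 * b0 / (250 * sg)).
    by field; rewrite gt_eqF.
  rewrite e.
  have e' : eps * N * (9 * b0 / 250) = eps * (sg * N) * (9 * b0 / (250 * sg)).
    by field; rewrite gt_eqF.
  rewrite e' ler_pM2r //; apply: divr_gt0; rewrite ?mulr_gt0 //.
have hbN : 0 < b0 * N by rewrite mulr_gt0.
have : b0 * N * Y <= b0 * N * eps.
  apply: (le_trans hY); apply: (le_trans h3); apply: (le_trans h5).
  have e1 : N * (b0 * eps) = b0 * N * eps by ring.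
  have e2 : eps * N * (9 * b0 / 250) = 9 / 250 * (b0 * N * eps) by ring.
  rewrite e1 in hc3; rewrite e2 in h7.
  have hZ : 0 < b0 * N * eps by rewrite !mulr_gt0.
  clear -hc3 h6 h7 hZ; lra.
by move=> h; rewrite -(ler_pM2l hbN).
Qed.

Lemma K_facts {R : realType} (eps b0 r0 sg D0 nl : R) :
  exists j : nat, K_nat eps b0 r0 sg D0 nl = j.+1 /\
  (ceil_log_or sg (4 * D0 * Num.sqrt r0 / (Num.sqrt b0 * eps))
      (Num.ceil (2 * logb sg (8 / (eps * (ln sg) ^+ 2))) - 1) <= j%:Z)%R /\
  (ceil_log_or sg (4 * D0 / (b0 * eps))
      (Num.ceil (2 * logb sg (8 / (eps * (ln sg) ^+ 2))) - 1) <= j%:Z)%R /\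
  (ceil_log_or sg (5 * (D0 + nl) ^+ 2 / (b0 * eps))
      (Num.ceil (2 * logb sg (8 / (eps * (ln sg) ^+ 2))) - 1) <= j%:Z)%R /\
  (Num.ceil (2 * logb sg (8 / (eps * (ln sg) ^+ 2))) - 1 + 1 <= j.+1%:Z)%R.
Proof.
rewrite /K_nat.
set z := K_int eps b0 r0 sg D0 nl.
have hz1 : (1 <= Num.max z 1)%R by rewrite le_max lexx orbT.
have hzK : (z <= Num.max z 1)%R by rewrite le_max lexx.
have ha : ((absz (Num.max z 1))%:Z = Num.max z 1)%R.
  by rewrite gez0_abs // (le_trans _ hz1).
case ek : (absz (Num.max z 1)) => [|j].
  by move: ha; rewrite ek => h; move: hz1; rewrite -h.
exists j; split => //.
rewrite ek in ha.
have hzj : (z <= j.+1%:Z)%R by rewrite ha.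
move: hzj; rewrite /z /K_int.
set c1 := ceil_log_or _ _ _; set c2 := ceil_log_or _ _ _; set c3 := ceil_log_or _ _ _.
set t4 := Num.ceil _ - 1.
have -> : (j.+1%:Z = j%:Z + 1)%R by rewrite -addn1 PoszD.
rewrite lerD2r !ge_max => /andP[/andP[/andP[h1 h2] h3] h4].
do !split => //.
by rewrite lerD2r.
Qed.

Lemma sq_le {R : realType} (a b : R) : 0 <= a -> 0 <= b -> a ^+ 2 <= b ^+ 2 -> a <= b.
Proof. by move=> ha hb h; rewrite -ler_sqr ?nnegrE. Qed.

Theorem theorem5p5 (R : realType) (n mE mI : nat)
  (f : 'cV[R]_n -> R) (gradf : 'cV[R]_n -> 'cV[R]_n) (Lf mu : R)
  (r : 'cV[R]_n -> \bar R)
  (AE : 'M[R]_(mE, n)) (bE : 'cV[R]_mE) (AI : 'M[R]_(mI, n)) (bI : 'cV[R]_mI)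
  (xstar : 'cV[R]_n) (lEstar : 'cV[R]_mE) (lIstar : 'cV[R]_mI)
  (eps beta0 rho0 sigma : R)
  (x : nat -> 'cV[R]_n) (lamE : nat -> 'cV[R]_mE) (lamI : nat -> 'cV[R]_mI) :
  (* problem data *)
  convex_fun f -> has_gradient f gradf -> lipschitz_map Lf gradf ->
  0 <= mu -> strongly_convex mu f ->
  proper_fun r -> lsc_fun r -> convex_efun r ->
  let G := fun y => ((f y)%:E + r y)%E in
  (* KKT point *)
  0 \in [set g + AE^T *m lEstar + AI^T *m lIstar | g in subdiff G xstar] ->
  AE *m xstar = bE ->
  (forall i, (AI *m xstar) i 0 <= bI i 0) ->
  (forall i, 0 <= lIstar i 0) ->
  vdot lIstar (AI *m xstar - bI) = 0 ->
  (* parameters *)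
  0 < eps < 1 -> 0 < beta0 -> 0 < rho0 -> 1 < sigma ->
  let beta := fun k : nat => beta0 * sigma ^+ k in
  let rho := fun k : nat => rho0 / sigma ^+ k in
  let epsbar := eps * (sigma - 1) / (8 * (sigma + 1)) * Num.min 1 (Num.sqrt (beta0 * rho0)) in
  let epsbark := fun k : nat =>
    Num.min epsbar (Num.sqrt (rho0 / (20 * sigma)) / sigma ^+ k) in
  (* iPALM iterates *)
  G (x 0%N) \is a fin_num ->
  (forall k : nat,
     let Psi := fun y => (aug_lag AE bE AI bI G (beta k) y (lamE k) (lamI k)
                          + ((rho k) / 2 * vnorm (y - x k) ^+ 2)%:E)%E in
     (dist0 (subdiff Psi (x k.+1)) <= (epsbark k)%:E)%E) ->
  (forall k : nat, lamE k.+1 = lamE k + beta k *: (AE *m x k.+1 - bE)) ->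
  (forall k : nat, lamI k.+1 = ppart (lamI k + beta k *: (AI *m x k.+1 - bI))) ->
  let D0 := Num.sqrt (beta0 * rho0 * vnorm (x 0%N - xstar) ^+ 2
                      + (vnorm (lamE 0%N - lEstar) ^+ 2 + vnorm (lamI 0%N - lIstar) ^+ 2)) in
  let nlamstar := Num.sqrt (vnorm lEstar ^+ 2 + vnorm lIstar ^+ 2) in
  let K := K_nat eps beta0 rho0 sigma D0 nlamstar in
  (dist0 [set (g + AE^T *m lamE K + AI^T *m lamI K)%R | g in subdiff G (x K)]%R
     <= eps%:E)%E /\
  Num.sqrt (vnorm (AE *m x K - bE) ^+ 2 + vnorm (ppart (AI *m x K - bI)) ^+ 2) <= eps /\
  (forall i, 0 <= lamI K i 0) /\
  vnorm (hadamard (lamI K) (AI *m x K - bI)) <= eps.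
Proof.
move=> fc _ _ _ _ rprop _ rc G hKKT hEs hIs hls hcs /andP[he0 he1] hb0 hr0 hs
  beta rho epsbar epsbark _ hiter hlE hlI D0 nlamstar K.
have rN : forall y, r y != -oo%E by case: rprop.
have hs0 : 0 < sigma by lra.
have hsk : forall k, 0 < sigma ^+ k by move=> k; rewrite exprn_gt0.
have hbk : forall k, 0 < beta k by move=> k; rewrite /beta mulr_gt0.
have hrk : forall k, 0 < rho k by move=> k; rewrite /rho divr_gt0.
set c := beta0 * rho0.
have hc : 0 < c by rewrite mulr_gt0.
have hbr : forall k, beta k * rho k = c.
  by move=> k; rewrite /beta /rho /c; field; rewrite gt_eqF.
have hm1 : 0 < Num.min 1 (Num.sqrt (beta0 * rho0)).
  by rewrite lt_min ltr01 sqrtr_gt0 mulr_gt0.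
have hepsbar : 0 < epsbar.
  rewrite /epsbar mulr_gt0 // divr_gt0 ?mulr_gt0 //; lra.
have hek : forall k, 0 < epsbark k.
  move=> k; rewrite /epsbark lt_min hepsbar /= divr_gt0 // sqrtr_gt0 divr_gt0 //.
  by rewrite mulr_gt0 //.
have step : forall k, exists s : 'cV[R]_n, vnorm s <= 6 / 5 * epsbark k /\
   (s - (AE^T *m lamE k.+1 + AI^T *m lamI k.+1 + rho k *: (x k.+1 - x k))) \in subdiff G (x k.+1).
  move=> k.
  have ePsi : (fun y => aug_lag AE bE AI bI G (beta k) y (lamE k) (lamI k)
                 + ((rho k) / 2 * vnorm (y - x k) ^+ 2)%:E)%E
      = (fun y => ((f y)%:E + r y) + (hreal AE bE AI bI (beta k) (rho k) (lamE k) (lamI k) (x k) y)%:E)%E.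
    by apply: funext => y; rewrite /aug_lag /hreal [in RHS]EFinD addeA.
  have hk : (dist0 (subdiff (fun y => ((f y)%:E + r y)
         + (hreal AE bE AI bI (beta k) (rho k) (lamE k) (lamI k) (x k) y)%:E)%E (x k.+1))
         <= (epsbark k)%:E)%E.
    rewrite -ePsi; exact: (hiter k).
  have hlt : (dist0 (subdiff (fun y => ((f y)%:E + r y)
         + (hreal AE bE AI bI (beta k) (rho k) (lamE k) (lamI k) (x k) y)%:E)%E (x k.+1))
         < (6 / 5 * epsbark k)%:E)%E.
    apply: (le_lt_trans hk); rewrite lte_fin; have := hek k; lra.
  have [_ [s hsin <-] hy] := ereal_inf_lt hlt.
  exists s; split; first by rewrite lte_fin in hy; exact: ltW.
  have hQ : forall v, exists Q : R, forall t : R, 0 < t < 1 ->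
       hreal AE bE AI bI (beta k) (rho k) (lamE k) (lamI k) (x k) (x k.+1 + t *: v)
       <= hreal AE bE AI bI (beta k) (rho k) (lamE k) (lamI k) (x k) (x k.+1)
          + t * vdot (AE^T *m (lamE k + beta k *: (AE *m x k.+1 - bE))
                      + AI^T *m ppart (beta k *: (AI *m x k.+1 - bI) + lamI k)
                      + rho k *: (x k.+1 - x k)) v + t ^+ 2 * Q.
    by move=> v; eexists => t _; apply: hreal_bound; exact: hbk.
  have := @subgrad_shift _ _ f r _ _ _ _ fc rc rN hQ (mem_set hsin).
  by rewrite hlE hlI [lamI k + _]addrC.
have [gs hgs egs] : exists2 gs, gs \in subdiff G xstar &
    gs = - (AE^T *m lEstar + AI^T *m lIstar).
  move: hKKT; rewrite inE => -[g hg eg]; exists g; first exact: mem_set.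
  by apply/eqP; rewrite -addr_eq0 addrA eg.
pose Dk k := Num.sqrt (c * vnorm (x k - xstar) ^+ 2
   + (vnorm (lamE k - lEstar) ^+ 2 + vnorm (lamI k - lIstar) ^+ 2)).
pose Dl k := Num.sqrt (c * vnorm (x k.+1 - x k) ^+ 2
   + (vnorm (lamE k.+1 - lamE k) ^+ 2 + vnorm (lamI k.+1 - lamI k) ^+ 2)).
pose abar k := 6 / 5 * beta k * epsbark k / Num.sqrt c.
have hc0 : 0 <= c := ltW hc.
have hsc : 0 < Num.sqrt c by rewrite sqrtr_gt0.
have hab : forall k, 0 <= abar k.
  move=> k; rewrite /abar divr_ge0 ?mulr_ge0 ?ltW //; exact: hbk.
have pos3 : forall (a : R) (u1 u2 u3 : R), 0 <= a -> 0 <= a * u1 ^+ 2 + (u2 ^+ 2 + u3 ^+ 2).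
  move=> a u1 u2 u3 ha; apply: addr_ge0; first by apply: mulr_ge0 => //; exact: sqr_ge0.
  by apply: addr_ge0; exact: sqr_ge0.
have rec : forall k, Dk k.+1 <= Dk k + 2 * abar k /\ Dl k <= Dk k + abar k.
  move=> k; have [s [hsn hg]] := step k.
  have hmono := @mono_sub _ _ G _ _ _ _ hg hgs.
  rewrite egs in hmono.
  set v := x k.+1 - xstar in hmono *.
  have eAv : AE *m v = AE *m x k.+1 - bE by rewrite /v mulmxBr hEs.
  have eIv : AI *m v = (AI *m x k.+1 - bI) - (AI *m xstar - bI).
    by rewrite /v mulmxBr; apply/matrixP => i j; rewrite !mxE; ring.
  have eq1 : vdot (s - (AE^T *m lamE k.+1 + AI^T *m lamI k.+1 + rho k *: (x k.+1 - x k))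
        - - (AE^T *m lEstar + AI^T *m lIstar)) v
     = vdot s v - vdot (lamE k.+1 - lEstar) (AE *m v) - vdot (lamI k.+1 - lIstar) (AI *m v)
       - rho k * vdot (x k.+1 - x k) v.
    rewrite ?(vdotDl, vdotNl, vdotZl, vdot_tr); ring.
  rewrite eq1 in hmono.
  have dE : lamE k.+1 - lamE k = beta k *: (AE *m v).
    by rewrite hlE eAv addrAC subrr add0r.
  have hE : vdot (lamE k.+1 - lEstar) (lamE k.+1 - lamE k)
        = beta k * vdot (lamE k.+1 - lEstar) (AE *m v) by rewrite dE vdotZr.
  have hws : forall i, (AI *m xstar - bI) i 0 <= 0.
    by move=> i; have := hIs i; rewrite !mxE => h; lra.
  have hI := @dual_I _ _ (beta k) (lamI k) lIstar (AI *m x k.+1 - bI) (AI *m xstar - bI) (hbk k) hls hws hcs.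
  rewrite -hlI -eIv in hI.
  have hmb := mulr_ge0 (ltW (hbk k)) hmono.
  have ebm : beta k * (vdot s v - vdot (lamE k.+1 - lEstar) (AE *m v)
       - vdot (lamI k.+1 - lIstar) (AI *m v) - rho k * vdot (x k.+1 - x k) v)
     = beta k * vdot s v - beta k * vdot (lamE k.+1 - lEstar) (AE *m v)
       - beta k * vdot (lamI k.+1 - lIstar) (AI *m v) - c * vdot (x k.+1 - x k) v.
    by rewrite -(hbr k); ring.
  rewrite ebm in hmb.
  have p1 := polar (x k.+1) (x k) xstar.
  have p2 := polar (lamE k.+1) (lamE k) lEstar.
  have p3 := polar (lamI k.+1) (lamI k) lIstar.
  rewrite -/v (vdotC (lamE k.+1 - lamE k)) (vdotC (lamI k.+1 - lamI k)) in p1 p2 p3.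
  have sq1 : Dk k.+1 ^+ 2 = c * vdot v v + (vdot (lamE k.+1 - lEstar) (lamE k.+1 - lEstar)
      + vdot (lamI k.+1 - lIstar) (lamI k.+1 - lIstar)).
    by rewrite /Dk sqr_sqrtr ?pos3 ?hc0 // !vnorm2.
  have sq0 : Dk k ^+ 2 = c * vdot (x k - xstar) (x k - xstar)
      + (vdot (lamE k - lEstar) (lamE k - lEstar) + vdot (lamI k - lIstar) (lamI k - lIstar)).
    by rewrite /Dk sqr_sqrtr ?pos3 ?hc0 // !vnorm2.
  have sql : Dl k ^+ 2 = c * vdot (x k.+1 - x k) (x k.+1 - x k)
      + (vdot (lamE k.+1 - lamE k) (lamE k.+1 - lamE k)
         + vdot (lamI k.+1 - lamI k) (lamI k.+1 - lamI k)).
    by rewrite /Dl sqr_sqrtr ?pos3 ?hc0 // !vnorm2.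
  have hcs1 := CS' s v.
  have hvD : Num.sqrt c * vnorm v <= Dk k.+1.
    apply: le_sqrt_sq; first by rewrite mulr_ge0 ?sqrtr_ge0 ?vnorm_ge0.
    rewrite exprMn sqr_sqrtr ?hc0 // lerDl; apply: addr_ge0; exact: sqr_ge0.
  have hbs : beta k * vdot s v <= abar k * Dk k.+1.
    have e : abar k * (Num.sqrt c * vnorm v) = beta k * (6 / 5 * epsbark k) * vnorm v.
      by rewrite /abar; field; rewrite gt_eqF.
    apply: (le_trans _ (ler_wpM2l (hab k) hvD)); rewrite e -mulrA ler_pM2l //.
    apply: (le_trans hcs1); apply: ler_wpM2r => //; exact: vnorm_ge0.
  have hmain : Dk k.+1 ^+ 2 + Dl k ^+ 2 <= Dk k ^+ 2 + 2 * abar k * Dk k.+1.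
    have p1c := congr1 (fun t => c * t) p1; simpl in p1c.
    rewrite sq1 sq0 sql; lra.
  apply: step_scalar => //; exact: sqrtr_ge0.
pose T k := \sum_(i < k) abar i.
have hT0 : forall k, 0 <= T k by move=> k; apply: sumr_ge0 => i _; exact: hab.
have hTS : forall k, T k.+1 = T k + abar k by move=> k; rewrite /T big_ord_recr.
have hDk : forall k, Dk k <= D0 + 2 * T k.
  elim=> [|k IH]; first by rewrite /T big_ord0 mulr0 addr0; exact: lexx.
  rewrite hTS; have [h _] := rec k; lra.
pose Cg := 6 / 5 * beta0 * epsbar / Num.sqrt c.
have hCg : 0 <= Cg.
  rewrite /Cg; apply: divr_ge0; last exact: ltW.
  by apply: mulr_ge0; [apply: mulr_ge0|]; lra.
have habar1 : forall i, abar i <= Cg * sigma ^+ i.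
  move=> i; rewrite /abar /Cg /beta.
  have : epsbark i <= epsbar by rewrite /epsbark ge_min lexx.
  have := hsk i; have := hek i.
  move=> h1 h2 h3.
  have e : 6 / 5 * beta0 * epsbar / Num.sqrt c * sigma ^+ i
         = 6 / 5 * (beta0 * sigma ^+ i) * epsbar / Num.sqrt c by field; rewrite gt_eqF.
  have hpos : 0 < 6 / 5 * (beta0 * sigma ^+ i) by apply: mulr_gt0; [lra | exact: mulr_gt0].
  by rewrite e ler_pM2r ?invr_gt0 // ler_pM2l.
have hT1 : forall k, T k <= Cg * (sigma ^+ k - 1) / (sigma - 1).
  elim=> [|k IH]; first by rewrite /T big_ord0 expr0 subrr mulr0 mul0r.
  rewrite hTS.
  have eT1 : Cg * (sigma ^+ k - 1) / (sigma - 1) + Cg * sigma ^+ k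
         = Cg * (sigma ^+ k.+1 - 1) / (sigma - 1).
    by rewrite exprS; field; rewrite subr_eq0 gt_eqF.
  rewrite -eT1; apply: lerD => //; exact: habar1.
pose M := Num.sqrt (rho0 / (20 * sigma)).
pose B := 6 / 5 * beta0 * M / Num.sqrt c.
have hM : 0 < M by rewrite sqrtr_gt0 divr_gt0 // mulr_gt0.
have hB : 0 <= B.
  rewrite /B; apply: divr_ge0; last exact: ltW.
  by apply: mulr_ge0; [apply: mulr_ge0|]; lra.
have habar2 : forall i, abar i <= B.
  move=> i; rewrite /abar /B /beta.
  have : epsbark i <= M / sigma ^+ i by rewrite /epsbark ge_min lexx orbT.
  have := hsk i; have := hek i.
  move=> h1 h2 h3.
  have e : 6 / 5 * beta0 * M / Num.sqrt c
         = 6 / 5 * (beta0 * sigma ^+ i) * (M / sigma ^+ i) / Num.sqrt c.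
    by field; rewrite !gt_eqF.
  have hpos : 0 < 6 / 5 * (beta0 * sigma ^+ i) by apply: mulr_gt0; [lra | exact: mulr_gt0].
  by rewrite e ler_pM2r ?invr_gt0 // ler_pM2l.
have hT2 : forall k, T k <= k%:R * B.
  elim=> [|k IH]; first by rewrite /T big_ord0 mul0r.
  rewrite hTS -addn1 natrD mulrDl mul1r; apply: lerD => //.
have hB2 : B ^+ 2 = 9 * beta0 / (125 * sigma).
  rewrite /B /M exprMn exprMn sqr_sqrtr; last by rewrite divr_ge0 ?mulr_ge0 ?ltW.
  rewrite exprVn sqr_sqrtr // /c; field; rewrite !gt_eqF //.
have [j [eK [c1 [c2 [c3 c4]]]]] := K_facts eps beta0 rho0 sigma D0 nlamstar.
have eK' : K = j.+1 := eK.
rewrite eK'.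
have cd1 := @logcond _ _ _ _ _ hs c1.
have cd2 := @logcond _ _ _ _ _ hs c2.
have cd3 := @logcond _ _ _ _ _ hs c3.
have cd4 := @cond4 _ _ _ _ hs he0 c4.
have [s [hsn hg]] := step j.
set sb := Num.sqrt beta0; set sr := Num.sqrt rho0.
have hsb : 0 < sb by rewrite sqrtr_gt0.
have hsr : 0 < sr by rewrite sqrtr_gt0.
have esc : Num.sqrt c = sb * sr by rewrite /c sqrtrM // ltW.
have ebs : beta0 = sb * sb by rewrite -expr2 sqr_sqrtr // ltW.
have ers : rho0 = sr ^+ 2 by rewrite sqr_sqrtr // ltW.
have hD0 : 0 <= D0 by exact: sqrtr_ge0.
have hnl : 0 <= nlamstar by exact: sqrtr_ge0.
have sql : Dl j ^+ 2 = c * vdot (x j.+1 - x j) (x j.+1 - x j)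
      + (vdot (lamE j.+1 - lamE j) (lamE j.+1 - lamE j)
         + vdot (lamI j.+1 - lamI j) (lamI j.+1 - lamI j)).
  by rewrite /Dl sqr_sqrtr ?pos3 ?hc0 // !vnorm2.
have hDl0 : 0 <= Dl j by exact: sqrtr_ge0.
have [hrec1 hrec2] := rec j.
have hDlT : Dl j <= D0 + 2 * T j + abar j.
  have := hDk j; lra.
have hDlb : Dl j <= D0 + Cg * ((sigma + 1) / (sigma - 1)) * sigma ^+ j.
  apply: (le_trans hDlT).
  have h1 := hT1 j; have h2 := habar1 j.
  have e1 : Cg * ((sigma + 1) / (sigma - 1)) * sigma ^+ j
     = 2 * (Cg * (sigma ^+ j - 1) / (sigma - 1)) + Cg * sigma ^+ j + 2 * Cg / (sigma - 1).
    by field; rewrite subr_eq0 gt_eqF.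
  have h3 : 0 <= 2 * Cg / (sigma - 1) by apply: divr_ge0; lra.
  rewrite e1; lra.
have eCg : Cg = 6 / 5 * (sb * sb) * epsbar / (sb * sr) by rewrite /Cg esc ebs.
rewrite eCg in hDlb.
have hm1' : 0 <= Num.min 1 (Num.sqrt (beta0 * rho0)) <= 1.
  by rewrite ltW //= ge_min lexx.
have hej : epsbark j <= epsbar by rewrite /epsbark ge_min lexx.
split.
  set e0 := s - rho j *: (x j.+1 - x j).
  have hin : [set (vnorm s0)%:E | s0 in [set (g + AE^T *m lamE j.+1 + AI^T *m lamI j.+1)%R
        | g in subdiff G (x j.+1)]] (vnorm e0)%:E.
    exists e0 => //; exists (s - (AE^T *m lamE j.+1 + AI^T *m lamI j.+1 + rho j *: (x j.+1 - x j))).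
      by move: hg; rewrite inE.
    by rewrite /e0; apply/matrixP => i0 j0; rewrite !mxE; ring.
  apply: le_trans (ereal_inf_lbound hin) _; rewrite lee_fin.
  have hdx : 0 <= vnorm (x j.+1 - x j) by exact: vnorm_ge0.
  have hsdx : sb * sr * vnorm (x j.+1 - x j) <= Dl j.
    rewrite -esc; apply: le_sqrt_sq; first by rewrite mulr_ge0 ?sqrtr_ge0.
    rewrite exprMn sqr_sqrtr ?hc0 // lerDl.
    by apply: addr_ge0; exact: sqr_ge0.
  have hfs := @final_stat _ eps sigma sb sr (sigma ^+ j) D0 (Num.min 1 (Num.sqrt (beta0 * rho0)))
    epsbar (epsbark j) (vnorm s) (vnorm (x j.+1 - x j)) (Dl j) he0 hs hsb hsr (hsk j) hD0 hm1'
    erefl hej hsn hdx hsdx hDlb cd1.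
  apply: le_trans hfs.
  apply: le_trans (vnormB _ _) _; rewrite vnormZ ger0_norm; last exact: ltW.
  rewrite lerD2l /rho ers; exact: lexx.
have hbj0 : 0 <= beta j := ltW (hbk j).
split.
  set F := Num.sqrt _.
  have hF0 : 0 <= F := sqrtr_ge0 _.
  have hbF : sb * sb * sigma ^+ j * F <= Dl j.
    have eb : sb * sb * sigma ^+ j = beta j by rewrite /beta ebs.
    rewrite eb; apply: le_sqrt_sq; first exact: mulr_ge0.
    rewrite exprMn /F sqr_sqrtr; last by apply: addr_ge0; exact: sqr_ge0.
    rewrite !vnorm2.
    have dE : lamE j.+1 - lamE j = beta j *: (AE *m x j.+1 - bE).
      by rewrite hlE addrAC subrr add0r.
    have hfI := @feas_I _ _ (beta j) (lamI j) (AI *m x j.+1 - bI) (hbk j).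
    rewrite -hlI in hfI.
    rewrite dE vdotZl vdotZr.
    have := mulr_ge0 hc0 (vdot_ge0 (x j.+1 - x j)).
    lra.
  have hm1b : Num.min 1 (Num.sqrt (beta0 * rho0)) <= sb * sr.
    by rewrite -esc ge_min lexx orbT.
  have cd2' : 4 * D0 / (sb * sb * eps) <= sigma ^+ j by rewrite -ebs.
  exact: (@final_feas _ eps sigma sb sr (sigma ^+ j) D0 (Num.min 1 (Num.sqrt (beta0 * rho0)))
    epsbar (Dl j) F he0 hs hsb hsr (hsk j) hD0 (ltW hm1) hm1b erefl hbF hDlb cd2').
split.
  by move=> i; rewrite hlI mxE le_max lexx orbT.
set Y := vnorm (hadamard (lamI j.+1) (AI *m x j.+1 - bI)).
have hY0 : 0 <= Y by exact: vnorm_ge0.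
have hcI := @compl_I _ _ (beta j) (lamI j) (AI *m x j.+1 - bI) (hbk j).
rewrite -hlI in hcI.
have h1 : beta j * Y <= vnorm (lamI j.+1) * vnorm (lamI j.+1 - lamI j).
  apply: sq_le; [exact: mulr_ge0 | apply: mulr_ge0; exact: vnorm_ge0 |].
  rewrite [(beta j * Y) ^+ 2]exprMn [(vnorm _ * vnorm _) ^+ 2]exprMn /Y !vnorm2; exact: hcI.
have hlam : vnorm (lamI j.+1) <= Dk j.+1 + nlamstar.
  have e : lamI j.+1 = (lamI j.+1 - lIstar) + lIstar by rewrite subrK.
  rewrite {1}e; apply: le_trans (vnormD _ _) _; apply: lerD.
    apply: le_sqrt_sq; first exact: vnorm_ge0.
    have := mulr_ge0 hc0 (sqr_ge0 (vnorm (x j.+1 - xstar))).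
    have := sqr_ge0 (vnorm (lamE j.+1 - lEstar)).
    lra.
  apply: le_sqrt_sq; first exact: vnorm_ge0.
  have := sqr_ge0 (vnorm lEstar); lra.
have hdl : vnorm (lamI j.+1 - lamI j) <= Dl j.
  apply: le_sqrt_sq; first exact: vnorm_ge0.
  have := mulr_ge0 hc0 (sqr_ge0 (vnorm (x j.+1 - x j))).
  have := sqr_ge0 (vnorm (lamE j.+1 - lamE j)).
  lra.
have h2 : vnorm (lamI j.+1) * vnorm (lamI j.+1 - lamI j) <= (Dk j.+1 + nlamstar) * Dl j.
  by apply: ler_pM => //; exact: vnorm_ge0.
have hbY : beta0 * sigma ^+ j * Y <= (Dk j.+1 + nlamstar) * Dl j.
  exact: (le_trans h1 h2).
have hDlT2 : Dl j <= D0 + 2 * T j.+1.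
  rewrite hTS; have := hab j; lra.
have cd4' : 2 * j.+1%:R ^+ 2 <= eps * (sigma * sigma ^+ j) by rewrite -exprS.
exact: (@final_compl _ eps sigma beta0 (sigma ^+ j) j.+1%:R D0 nlamstar (T j.+1) B Y
   (Dk j.+1) (Dl j) he0 hs hb0 (hsk j) hD0 hnl (hT0 _) hB (ler0n _ _) hbY (sqrtr_ge0 _)
   hDl0 (hDk _) hDlT2 (hT2 _) hB2 cd3 cd4').
Qed.
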